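(* For every $0<c<1$ there exist a constant $K>0$ and infinitely many positive integers $k$ such that, for each such $k$, there is an instance with committee size $k$ and an exhaustive affordable committee $W$ satisfying EJR whose utilitarian ratio is at most $K/k^{1-c}$.
   Context: An instance $(A,C,k)$ consists of a finite nonempty candidate set $C$, voters $N=\{1,\dots,n\}$, approval sets $A_i\subseteq C$, and a committee size $1\le k\le|C|$. A committee is $W\subseteq C$ with $|W|\le k$; it is exhaustive if $|W|=k$. $\mathrm{sw}(W)=\sum_i|A_i\cap W|$; the utilitarian ratio is $\mathrm{sw}(W)/\max\{\mathrm{sw}(W'):|W'|=k\}$. $W$ is affordable if there are $p_i:C\to\mathbb{R}_{\ge0}$ with $p_i(c)=0$ for $c\notin A_i$, $\sum_c p_i(c)\le k/n$, $\sum_i p_i(c)=1$ for $c\in W$, $\sum_i p_i(c)=0$ for $c\notin W$. $W$ satisfies EJR if for every $\ell\in\{1,\dots,k\}$ and every group $N'\subseteq N$ with $|N'|\ge\ell n/k$ and $|\bigcap_{i\in N'}A_i|\ge\ell$, some $i\in N'$ has $|A_i\cap W|\ge\ell$. *)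

(* Defs.v *)
From HB Require Import structures.
From mathcomp Require Import all_boot all_order all_algebra.
From mathcomp Require Import reals exp.
Set Implicit Arguments. Unset Strict Implicit. Unset Printing Implicit Defensive.
Import Order.TTheory GRing.Theory Num.Theory.
Local Open Scope ring_scope.

Section Defs.
Variables (C : finType) (n : nat) (A : 'I_n -> {set C}) (k : nat).

Definition valid_instance : Prop :=
  (0 < #|C|)%N /\ (0 < n)%N /\ (1 <= k)%N /\ (k <= #|C|)%N.

Definition committee (W : {set C}) : Prop := (#|W| <= k)%N.
Definition exhaustive (W : {set C}) : Prop := #|W| = k.

Definition sw (W : {set C}) : nat := (\sum_(i < n) #|A i :&: W|)%N.

Definition max_sw : nat := (\max_(W' : {set C} | #|W'| == k) sw W')%N.

Definition util_ratio (R : realType) (W : {set C}) : R :=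
  (sw W)%:R / (max_sw)%:R.

Definition affordable (R : realType) (W : {set C}) : Prop :=
  exists p : 'I_n -> C -> R,
    [/\ (forall i c, 0 <= p i c),
        (forall i c, c \notin A i -> p i c = 0),
        (forall i, \sum_(c : C) p i c <= k%:R / n%:R),
        (forall c, c \in W -> \sum_(i < n) p i c = 1) &
        (forall c, c \notin W -> \sum_(i < n) p i c = 0)].

Definition EJR (R : realType) (W : {set C}) : Prop :=
  forall (l : nat) (N' : {set 'I_n}),
    (1 <= l)%N -> (l <= k)%N ->
    (#|N'|%:R >= (l%:R * n%:R / k%:R :> R)) ->
    (l <= #|\bigcap_(i in N') A i|)%N ->
    exists2 i, i \in N' & (l <= #|A i :&: W|)%N.

End Defs.

(* Main.v *)
Require Import Defs.
From HB Require Import structures.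
From mathcomp Require Import all_boot all_order all_algebra.
From mathcomp Require Import reals exp.
Import Order.TTheory GRing.Theory Num.Theory.
Set Implicit Arguments. Unset Strict Implicit. Unset Printing Implicit Defensive.
From mathcomp Require Import ring lra.
Lemma card_fix (r D : nat) (P : {set 'I_r}) (g : {ffun 'I_r -> 'I_D}) :
  #|[set v : {ffun 'I_r -> 'I_D} | [forall a in P, v a == g a]]| = D ^ (r - #|P|).
Proof.
pose F := fun a : 'I_r => if a \in P then pred1 (g a) else predT.
have -> : #|[set v : {ffun 'I_r -> 'I_D} | [forall a in P, v a == g a]]| = #|family F|.
  apply: eq_card => v; rewrite inE; apply/forall_inP/familyP => /= H a.
    by rewrite /F; case: ifP => // aP; rewrite inE /=; apply: H.
  by move=> aP; have := H a; rewrite /F aP inE.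
rewrite card_family foldrE big_image /=.
rewrite (eq_bigr (fun a => if a \notin P then D else 1)); last first.
  by move=> a _; rewrite /F; case: ifP => _; rewrite ?card1 ?card_ord.
rewrite -big_mkcond /= prod_nat_const.
congr (_ ^ _).
have h := cardC (mem P); rewrite card_ord in h.
by rewrite -[X in X - _]h addKn; apply: eq_card => a; rewrite !inE.
Qed.

Section Constr.
Variable D : nat.
Definition rr := (D ^ D)%N.
Definition Cand := (bool * ('I_rr * 'I_D))%type.
Definition Vot := ('I_rr * {ffun 'I_rr -> 'I_D})%type.
Definition nV := #|{: Vot}|.
Definition Ap (x : Vot) : {set Cand} :=
  [set c : Cand | if c.1 then x.2 c.2.1 == c.2.2 else x.1 == c.2.1].
Definition Aof (i : 'I_nV) : {set Cand} := Ap (enum_val (A := {: Vot}) i).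
Definition Wc : {set Cand} := [set (false, p) | p : 'I_rr * 'I_D].
Definition Xc : {set Cand} := [set (true, p) | p : 'I_rr * 'I_D].

Lemma inWc c : (c \in Wc) = ~~ c.1.
Proof.
case: c => [b p]; apply/imsetP/idP => /=.
  by case=> q _ [-> _].
by case: b => // _; exists p.
Qed.

Lemma inXc c : (c \in Xc) = c.1.
Proof.
case: c => [b p]; apply/imsetP/idP => /=.
  by case=> q _ [-> _].
by case: b => // _; exists p.
Qed.

Lemma card_Wc : #|Wc| = (rr * D)%N.
Proof. by rewrite card_imset ?cardsT ?card_prod ?card_ord // => p q [->]. Qed.
Lemma card_Xc : #|Xc| = (rr * D)%N.
Proof. by rewrite card_imset ?cardsT ?card_prod ?card_ord // => p q [->]. Qed.

Lemma card_nV : nV = (rr * D ^ rr)%N.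
Proof. by rewrite /nV card_prod card_ffun !card_ord. Qed.

Lemma AW x : #|Ap x :&: Wc| = D.
Proof.
have -> : Ap x :&: Wc = [set (false, (x.1, t)) | t : 'I_D].
  apply/setP => -[b [u t]]; rewrite !inE inWc /=.
  apply/idP/imsetP => /=.
    case: b => /=; first by rewrite andbF.
    by rewrite andbT => /eqP e; exists t; rewrite ?e.
  by case=> t' _ [-> -> _] /=; rewrite eqxx.
by rewrite card_imset ?card_ord // => t1 t2 [].
Qed.

Lemma AX x : #|Ap x :&: Xc| = rr.
Proof.
have -> : Ap x :&: Xc = [set (true, (a, x.2 a)) | a : 'I_rr].
  apply/setP => -[b [u t]]; rewrite !inE inXc /=.
  apply/idP/imsetP => /=.
    case: b => /=; last by rewrite andbF.
    by rewrite andbT => /eqP <-; exists u.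
  by case=> t' _ [-> -> ->] /=; rewrite eqxx.
by rewrite card_imset ?card_ord // => t1 t2 [].
Qed.

Lemma card_app (u : 'I_rr) : #|[set x : Vot | x.1 == u]| = (D ^ rr)%N.
Proof.
have -> : [set x : Vot | x.1 == u] = [set (u, v) | v : {ffun 'I_rr -> 'I_D}].
  apply/setP => -[u' v]; rewrite !inE /=; apply/eqP/imsetP => /=.
    by move=> ->; exists v.
  by case=> v' _ [-> _].
rewrite card_imset; last by move=> v1 v2 [].
by rewrite card_ffun !card_ord.
Qed.
End Constr.

Lemma arith (D l p : nat) : (2 <= D)%N -> (D < l)%N -> (l <= p)%N -> (p <= D ^ D)%N ->
  (D ^ D * D ^ (D ^ D - p) * (D ^ D * D) < l * (D ^ D * D ^ (D ^ D)))%N.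
Proof.
move=> D2 Dl lp pR.
have D0 : (0 < D)%N by apply: leq_trans D2.
have e : (D ^ (D ^ D) = D ^ (D ^ D - p) * D ^ p)%N by rewrite -expnD subnK.
rewrite e.
have -> : (l * (D ^ D * (D ^ (D ^ D - p) * D ^ p)) = (D ^ D * D ^ (D ^ D - p)) * (l * D ^ p))%N by ring.
rewrite ltn_pmul2l ?muln_gt0 ?expn_gt0 ?D0 //.
apply: (@leq_ltn_trans (D ^ p)).
  by rewrite -expnSr leq_pexp2l // (leq_trans Dl lp).
by apply: ltn_Pmull; [exact: leq_trans D2 (ltnW Dl) | rewrite expn_gt0 D0].
Qed.

Section RR.
Local Open Scope ring_scope.
Lemma afford (R : realType) (D : nat) : (2 <= D)%N ->
  @affordable (Cand D) (nV D) (@Aof D) (rr D * D)%N R (Wc D).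
Proof.
move=> D2.
have D0 : (0 < D)%N by apply: leq_trans D2.
have hpos : (0 < (D ^ rr D)%:R :> R)%R by rewrite ltr0n expn_gt0 D0.
pose a : R := ((D ^ rr D)%:R)^-1.
exists (fun i c => if c \in Aof i :&: Wc D then a else 0%R); split.
- by move=> i c; case: ifP => _ //; rewrite invr_ge0 ltW.
- by move=> i c cA; rewrite inE (negbTE cA).
- move=> i; rewrite -big_mkcond /= sumr_const /Aof AW card_nV.
  rewrite (natrM _ (rr D) D) (natrM _ (rr D) (D ^ rr D)) -mulf_div divff ?mul1r; last by rewrite pnatr_eq0 -lt0n expn_gt0 D0.
  by rewrite [X in _ <= X]mulrC mulr_natr lexx.
- move=> c cW.
  pose G := fun x : Vot D => if c \in Ap x :&: Wc D then a else 0%R.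
  rewrite (eq_bigr (fun i => G (enum_val (A := {: Vot D}) i))) //.
  rewrite -(big_enum_val (A := {: Vot D}) G) /G -big_mkcond /= sumr_const.
  have -> : #|[pred x : Vot D | predT x & c \in Ap x :&: Wc D]| = (D ^ rr D)%N.
    rewrite -(card_app c.2.1); apply: eq_card => x; rewrite !inE cW andbT.
    clear G; move: cW; rewrite inWc; case: c => -[] [u t] //= _.
  by rewrite /a -[_ *+ (D ^ rr D)%N]mulr_natr mulVf // gt_eqF.
- move=> c cW; apply: big1 => i _; rewrite inE (negbTE cW) andbF //.
Qed.

Lemma ejr (R : realType) (D : nat) : (2 <= D)%N ->
  @EJR (Cand D) (nV D) (@Aof D) (rr D * D)%N R (Wc D).
Proof.
move=> D2 l N' l1 lk hN hI.
have D0 : (0 < D)%N by apply: leq_trans D2.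
have k0 : (0 < rr D * D)%N by rewrite muln_gt0 expn_gt0 D0.
rewrite ler_pdivrMr ?ltr0n // -!natrM ler_nat in hN.
have {hN} hN : (l * (rr D * D ^ rr D) <= #|N'| * (rr D * D))%N by rewrite -card_nV.
have N0 : (0 < #|N'|)%N.
  rewrite lt0n; apply/negP => /eqP e; move: hN; rewrite e mul0n leqn0.
  by apply/negP; rewrite -lt0n !muln_gt0 l1 !expn_gt0 D0.
case/card_gt0P: N0 => i0 i0N.
case: (leqP l D) => lD.
  by exists i0 => //; rewrite /Aof AW.
exfalso.
set I := \bigcap_(i in N') Aof i in hI.
have inI : forall c i, c \in I -> i \in N' -> c \in Ap (enum_val (A := {: Vot D}) i).
  by move=> c i /bigcapP H iN; apply: H.
have cardN : #|N'| = #|[set enum_val (A := {: Vot D}) i | i in N']|.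
  by rewrite card_imset //; apply: enum_val_inj.
case: (boolP [exists c in I, ~~ c.1]).
  case/exists_inP => -[[] [u t]] //= cI _.
  have : (#|N'| <= D ^ rr D)%N.
    rewrite cardN -(card_app u); apply: subset_leq_card; apply/subsetP => x /imsetP [i iN ->].
    by have := inI _ _ cI iN; rewrite !inE /= => /eqP ->.
  move=> hc; move: hN; apply/negP; rewrite -ltnNge.
  apply: (@leq_ltn_trans (D ^ rr D * (rr D * D))%N); first by rewrite leq_mul2r hc orbT.
  have -> : (D ^ rr D * (rr D * D) = D * (rr D * D ^ rr D))%N by ring.
  by rewrite ltn_pmul2r // muln_gt0 !expn_gt0 D0.
rewrite negb_exists => /forallP allT.
have allT' : forall c, c \in I -> c.1 by move=> c cI; have := allT c; rewrite cI /= negbK.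
set x0 := enum_val (A := {: Vot D}) i0.
set P := [set a : 'I_(rr D) | (true, (a, x0.2 a)) \in I].
have IP : (#|I| <= #|P|)%N.
  apply: (@leq_trans #|[set (true, (a, x0.2 a)) | a in P] : {set Cand D}|); last exact: leq_imset_card.
  apply: subset_leq_card; apply/subsetP => c cI.
  have := inI _ _ cI i0N; rewrite inE (allT' _ cI) -/x0 => /eqP e.
  apply/imsetP; exists c.2.1; first by rewrite inE e; case: c cI {e} (allT' _ cI) => -[] [].
  by case: c cI e (allT' _ cI) => -[] [u t] //= _ ->.
have hc : (#|N'| <= rr D * D ^ (rr D - #|P|))%N.
  have -> : (rr D * D ^ (rr D - #|P|) = #|setX [set: 'I_(rr D)]
      [set v : {ffun 'I_(rr D) -> 'I_D} | [forall a in P, v a == x0.2 a]]|)%N.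
    by rewrite cardsX cardsT card_ord card_fix.
  rewrite cardN.
  apply: subset_leq_card; apply/subsetP => x /imsetP [i iN ->].
  rewrite inE in_setT inE /=; apply/forall_inP => a aP.
  rewrite inE in aP; have := inI _ _ aP iN; rewrite inE /=.
  done.
have lP : (l <= #|P|)%N by apply: leq_trans hI IP.
have PR : (#|P| <= rr D)%N by rewrite -[X in (_ <= X)%N](card_ord (rr D)) max_card.
have := arith D2 lD lP PR.
rewrite -/(rr D) ltnNge => /negP; apply.
by apply: leq_trans hN _; rewrite leq_mul2r hc orbT.
Qed.

Lemma real_part (R : realType) (c : R) (D : nat) : (2 <= D)%N -> 0 < c -> 2 < c * D%:R ->
  D%:R / (rr D)%:R <= 1 / powR ((rr D * D)%N%:R) (1 - c).
Proof.
move=> D2 c0 hc.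
have D0 : (0 < D)%N by apply: leq_trans D2.
set x : R := D%:R.
have x1 : 1 <= x by rewrite /x ler1n.
have x0 : 0 < x by rewrite /x ltr0n.
have e1 : (rr D)%:R = x ^+ D :> R by rewrite natrX.
have e2 : (rr D * D)%N%:R = x ^+ D.+1 :> R by rewrite natrM natrX exprSr.
have e4 : x ^+ D = x ^+ D.-1 * x by rewrite -exprSr prednK.
have e3 : x / x ^+ D = 1 / x ^+ D.-1.
  rewrite e4 invfM mulrCA mulfV ?gt_eqF // mulr1 div1r //.
have pw : powR (x ^+ D.+1) (1 - c) <= x ^+ D.-1.
  have -> : x ^+ D.+1 = powR x (D.+1)%:R by rewrite powR_mulrn // ltW.
  rewrite -powRrM -powR_mulrn; last exact: ltW.
  apply: ler_powR => //.
  have hD1 : (D.-1)%:R = x - 1 :> R by rewrite /x -[in RHS](prednK D0) -natr1 addrK.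
  rewrite hD1 -natr1 -/x.
  nra.
rewrite e1 e2 e3 !div1r lef_pV2 ?posrE ?exprn_gt0 ?powR_gt0 //.
by rewrite exprn_gt0.
Qed.

Lemma ratio (R : realType) (D : nat) : (2 <= D)%N ->
  @util_ratio (Cand D) (nV D) (@Aof D) (rr D * D)%N R (Wc D) <= D%:R / (rr D)%:R.
Proof.
move=> D2.
have D0 : (0 < D)%N by apply: leq_trans D2.
have n0 : (0 < nV D)%N by rewrite card_nV muln_gt0 !expn_gt0 D0.
have r0 : (0 < rr D)%N by rewrite expn_gt0 D0.
have swW : sw (@Aof D) (Wc D) = (nV D * D)%N.
  rewrite /sw (eq_bigr (fun _ => D)) ?sum_nat_const ?card_ord //.
  by move=> i _; rewrite /Aof AW.
have swX : sw (@Aof D) (Xc D) = (nV D * rr D)%N.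
  rewrite /sw (eq_bigr (fun _ => rr D)) ?sum_nat_const ?card_ord //.
  by move=> i _; rewrite /Aof AX.
have hm : (nV D * rr D <= max_sw (@Aof D) (rr D * D))%N.
  by rewrite -swX; apply: leq_bigmax_cond; rewrite card_Xc.
rewrite /util_ratio swW.
apply: (@le_trans _ _ ((nV D * D)%N%:R / (nV D * rr D)%N%:R)).
  apply: ler_wpM2l; first exact: ler0n.
  by rewrite lef_pV2 ?posrE ?ltr0n ?ler_nat // ?muln_gt0 ?n0 ?r0 // (leq_trans _ hm) // muln_gt0 n0.
rewrite !natrM -mulf_div divff ?mul1r //.
by rewrite pnatr_eq0 -lt0n.
Qed.
End RR.

Local Open Scope ring_scope.

Theorem theorem2 (R : realType) (c : R) :
  0 < c -> c < 1 ->
  exists K : R, 0 < K /\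
    forall m : nat, exists k : nat, (m <= k)%N /\ (0 < k)%N /\
      exists (C : finType) (n : nat) (A : 'I_n -> {set C}) (W : {set C}),
        valid_instance C n k /\
        @committee C k W /\
        @exhaustive C k W /\
        @affordable C n A k R W /\
        @EJR C n A k R W /\
        @util_ratio C n A k R W <= K / powR (k%:R) (1 - c).
Proof.
move=> c0 c1; exists 1; split => // m.
have c2 : 0 <= 2 / c by rewrite divr_ge0 // ltW.
have hN0 := archi_boundP c2.
set N0 := Num.Def.archi_bound (2 / c) in hN0.
set D := maxn (maxn m 2) N0.
have D2 : (2 <= D)%N by rewrite /D leq_max leq_max leqnn orbT.
have mD : (m <= D)%N by rewrite /D leq_max leq_max leqnn.
have ND : (N0 <= D)%N by rewrite /D leq_max leqnn orbT.
have D0 : (0 < D)%N by apply: leq_trans D2.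
have k0 : (0 < rr D * D)%N by rewrite muln_gt0 expn_gt0 D0.
exists (rr D * D)%N; split; first by apply: (leq_trans mD); rewrite leq_pmull // expn_gt0 D0.
split => //.
exists (Cand D), (nV D), (@Aof D), (Wc D).
split.
  rewrite /valid_instance /Cand card_prod card_bool card_prod !card_ord card_nV.
  have r0 : (0 < rr D)%N by rewrite expn_gt0 D0.
  by rewrite !muln_gt0 r0 D0 !expn_gt0 D0 leq_pmull.
split; first by rewrite /committee /Defs.committee card_Wc.
split; first by rewrite /exhaustive /Defs.exhaustive card_Wc.
split; first exact: afford.
split; first exact: ejr.
apply: le_trans (ratio R D2) _.
apply: real_part => //.
rewrite -ltr_pdivrMl // mulrC.
apply: (lt_le_trans hN0).
by rewrite ler_nat.
Qed.
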